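(* Let $n\geq 2$ and $m=\lfloor n/2\rfloor$. For every future-directed null vector $\zeta\in\mathbb{R}^{n,1}$ there exists $a\in\mathbb{C}^{2^m}$ with $\zeta=\zeta_a$, where $$\zeta_a=\sum_{j=1}^n\langle\sqrt{-1}\,c(e_j)a,a\rangle e_j+|a|^2e_0 .$$
   Context: $\mathbb{R}^{n,1}$ is Minkowski space with orthonormal basis $e_0=\partial/\partial t$, $e_j=\partial/\partial x_j$ ($1\le j\le n$) and metric $\sum dx_j^2-dt^2$; a future-directed null vector is a nonzero $\zeta$ with $\zeta\cdot\zeta=0$ and positive $e_0$-component. $\langle\cdot,\cdot\rangle$ is the standard Hermitian inner product on $\mathbb{C}^{2^m}$. The $c(e_j)$ are Baum's Clifford matrices: with $g_1=\begin{pmatrix}\sqrt{-1}&0\\0&-\sqrt{-1}\end{pmatrix}$, $g_2=\begin{pmatrix}0&\sqrt{-1}\\\sqrt{-1}&0\end{pmatrix}$, $T=\begin{pmatrix}0&-\sqrt{-1}\\\sqrt{-1}&0\end{pmatrix}$, $E=I_2$, set $c(e_{2j-1})=E\otimes\cdots\otimes E\otimes g_1\otimes T\otimes\cdots\otimes T$, $c(e_{2j})=E\otimes\cdots\otimes E\otimes g_2\otimes T\otimes\cdots\otimes T$ for $1\le j\le m$ ($j-1$ factors $E$, $m$ factors in total), and, if $n=2m+1$, $c(e_n)=\sqrt{-1}\,T\otimes\cdots\otimes T$ ($m$ factors). (For $n=3$ these are $g_1,g_2,\sqrt{-1}T$; for $n=2$ they are $g_1,g_2$.) *)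

(* Defs.v *)
From mathcomp Require Import all_boot all_algebra.
From mathcomp Require Import reals.
From mathcomp Require Import complex mxtens.

Set Implicit Arguments.
Unset Strict Implicit.
Unset Printing Implicit Defensive.

Import GRing.Theory Num.Theory.
Local Open Scope ring_scope.
Local Open Scope complex_scope.

Section Baum.
Variable R : realType.
Local Notation C := R[i].

Definition ii : C := 'i.

Definition g1 : 'M[C]_2 := \matrix_(i < 2, j < 2)
  (if i == j then (if i == 0 :> 'I_2 then ii else - ii) else 0).
Definition g2 : 'M[C]_2 := \matrix_(i < 2, j < 2)
  (if i == j then 0 else ii).
Definition Tm : 'M[C]_2 := \matrix_(i < 2, j < 2)
  (if i == j then 0 else if i == 0 :> 'I_2 then - ii else ii).
Definition Em : 'M[C]_2 := 1%:M.

(* f 0 (x) f 1 (x) ... (x) f (l-1)  (Kronecker product, first factor outermost) *)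
Fixpoint tenspow (l : nat) (f : nat -> 'M[C]_2) : 'M[C]_(2 ^ l) :=
  match l with
  | 0 => 1%:M
  | l'.+1 => castmx (esym (expnS 2 l'), esym (expnS 2 l'))
                    (f 0%N *t tenspow l' (fun k => f k.+1))
  end.

(* c(e_k) for 1 <= k <= n, as a 2^m x 2^m complex matrix, m = n./2.
   For k = 2j-1 (resp. 2j) with 1 <= j <= m: (j-1) factors E, then g1 (resp. g2),
   then T's, m factors in total.  For n = 2m+1 and k = n: sqrt(-1) T (x)...(x) T. *)
Definition cliff (n k : nat) : 'M[C]_(2 ^ n./2) :=
  if (1 <= k <= 2 * n./2)%N then
    let j := (k.-1)./2 in (* 0-based position of the special factor *)
    tenspow n./2 (fun l => if (l < j)%N then Em
                           else if l == j then (if odd k then g1 else g2)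
                           else Tm)
  else ii *: tenspow n./2 (fun _ => Tm).

(* standard Hermitian inner product on C^N, linear in the first slot *)
Definition hdot (N : nat) (u v : 'cV[C]_N) : C :=
  \sum_(k < N) u k 0 * (v k 0)^*.

Definition sqnorm (N : nat) (a : 'cV[C]_N) : C := \sum_(k < N) `|a k 0| ^+ 2.

(* Minkowski space R^{n,1}: zeta : 'cV[R]_(n.+1), component 0 is the e_0 = d/dt
   component, component j (1 <= j <= n) is the e_j = d/dx_j component. *)
Definition mink_dot (n : nat) (u v : 'cV[R]_(n.+1)) : R :=
  \sum_(j < n.+1 | j != ord0) u j 0 * v j 0 - u ord0 0 * v ord0 0.

Definition future_null (n : nat) (z : 'cV[R]_(n.+1)) : Prop :=
  z != 0 /\ mink_dot z z = 0 /\ 0 < z ord0 0.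

Definition zeta_of (n : nat) (a : 'cV[C]_(2 ^ n./2)) : 'cV[C]_(n.+1) :=
  \col_(j < n.+1)
    (if j == ord0 then sqnorm a else hdot (ii *: (cliff n j *m a)) a).

End Baum.

(* Main.v *)
Require Import Defs.
From mathcomp Require Import all_boot all_order all_algebra.
From mathcomp Require Import reals.
From mathcomp Require Import complex mxtens.
From mathcomp Require Import ring lra.
Import Order.TTheory GRing.Theory Num.Theory.
Local Open Scope ring_scope.
Local Open Scope complex_scope.
Set Implicit Arguments.
Unset Strict Implicit.
Unset Printing Implicit Defensive.

Section S.
Variable R : realType.
Local Notation C := R[i].

Lemma normC2 (z : C) : `|z| ^+ 2 = z * z^*.
Proof. rewrite -add_Re2_Im2; case: z => a b /=; apply/eqP; rewrite eq_complex /=.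
by rewrite mulrN opprK -!expr2 mulrN mulrC addNr !eqxx. Qed.

Lemma sqnormE N (a : 'cV[C]_N) : sqnorm a = hdot a a.
Proof. by apply: eq_bigr => k _; rewrite normC2. Qed.

Lemma hdotDl N (u u' v : 'cV[C]_N) : hdot (u + u') v = hdot u v + hdot u' v.
Proof. by rewrite /hdot -big_split; apply: eq_bigr => k _; rewrite mxE mulrDl. Qed.

Lemma hdotDr N (u v v' : 'cV[C]_N) : hdot u (v + v') = hdot u v + hdot u v'.
Proof. by rewrite /hdot -big_split; apply: eq_bigr => k _; rewrite mxE rmorphD mulrDr. Qed.

Lemma hdotZl N c (u v : 'cV[C]_N) : hdot (c *: u) v = c * hdot u v.
Proof. by rewrite /hdot mulr_sumr; apply: eq_bigr => k _; rewrite mxE mulrA. Qed.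

Lemma hdotZr N c (u v : 'cV[C]_N) : hdot u (c *: v) = c^* * hdot u v.
Proof. by rewrite /hdot mulr_sumr; apply: eq_bigr => k _; rewrite mxE rmorphM mulrCA. Qed.

Lemma hdot_cast N N' (e : N = N') (u v : 'cV[C]_N) :
  hdot (castmx (e, erefl 1%N) u) (castmx (e, erefl 1%N) v) = hdot u v.
Proof. by case: N' / e; rewrite castmx_id. Qed.

Lemma hdotT M N (u u' : 'cV[C]_M) (x y : 'cV[C]_N) :
  hdot (u *t x) (u' *t y) = hdot u u' * hdot x y.
Proof.
rewrite /hdot mulr_sum; apply: eq_bigr => k _.
rewrite !mxE rmorphM.
have -> : (mxtens_unindex (0 : 'I_(1*1))) = (0, 0).
  by apply/eqP; rewrite xpair_eqE !ord1 !eqxx.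
by rewrite mulrACA.
Qed.

Lemma tensmxDl m n p q (A A' : 'M[C]_(m,n)) (B : 'M[C]_(p,q)) :
  (A + A') *t B = A *t B + A' *t B.
Proof. by apply/matrixP => i j; rewrite !mxE mulrDl. Qed.
Lemma tensmxDr m n p q (A : 'M[C]_(m,n)) (B B' : 'M[C]_(p,q)) :
  A *t (B + B') = A *t B + A *t B'.
Proof. by apply/matrixP => i j; rewrite !mxE mulrDr. Qed.
Lemma tensmxZl m n p q c (A : 'M[C]_(m,n)) (B : 'M[C]_(p,q)) :
  (c *: A) *t B = c *: (A *t B).
Proof. by apply/matrixP => i j; rewrite !mxE mulrA. Qed.
Lemma tensmxZr m n p q c (A : 'M[C]_(m,n)) (B : 'M[C]_(p,q)) :
  A *t (c *: B) = c *: (A *t B).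
Proof. by apply/matrixP => i j; rewrite !mxE mulrCA. Qed.

Definition e0 : 'cV[C]_2 := delta_mx 0 0.
Definition e1 : 'cV[C]_2 := delta_mx 1 0.
Definition U N (v w : 'cV[C]_N) := e0 *t v + e1 *t w.

Lemma ord2 (i : 'I_2) : i = 0 \/ i = 1.
Proof. by case: i => [[|[|//]]] ?; [left|right]; apply: val_inj. Qed.

Lemma colE (A : 'M[C]_2) (q : 'I_2) :
  A *m delta_mx q 0 = A 0 q *: e0 + A 1 q *: e1.
Proof.
apply/matrixP => i j; rewrite !mxE !big_ord_recl big_ord0 !mxE /= !ord1.
case: (ord2 i) => ->; case: (ord2 q) => -> /=;
  rewrite ?(mulr0, mulr1, addr0, add0r) //; congr (A _ _); exact: val_inj.
Qed.

Lemma hdot_e00 : hdot e0 e0 = 1.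
Proof. by rewrite /hdot !big_ord_recl big_ord0 !mxE /= ?(mulr1n, mulr0n, conjC1, conjC0, mul0r, mulr0, mul1r, mulr1, addr0, add0r). Qed.
Lemma hdot_e11 : hdot e1 e1 = 1.
Proof. by rewrite /hdot !big_ord_recl big_ord0 !mxE /= ?(mulr1n, mulr0n, conjC1, conjC0, mul0r, mulr0, mul1r, mulr1, addr0, add0r). Qed.
Lemma hdot_e01 : hdot e0 e1 = 0.
Proof. by rewrite /hdot !big_ord_recl big_ord0 !mxE /= ?(mulr1n, mulr0n, conjC1, conjC0, mul0r, mulr0, mul1r, mulr1, addr0, add0r). Qed.
Lemma hdot_e10 : hdot e1 e0 = 0.
Proof. by rewrite /hdot !big_ord_recl big_ord0 !mxE /= ?(mulr1n, mulr0n, conjC1, conjC0, mul0r, mulr0, mul1r, mulr1, addr0, add0r). Qed.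

Lemma hdotU N (x0 x1 y0 y1 : 'cV[C]_N) :
  hdot (U x0 x1) (U y0 y1) = hdot x0 y0 + hdot x1 y1.
Proof.
by rewrite /U !hdotDl !hdotDr !hdotT hdot_e00 hdot_e11 hdot_e01 hdot_e10
  !mul0r !mul1r addr0 add0r.
Qed.

Lemma mulU N (A : 'M[C]_2) (B : 'M[C]_N) (v w : 'cV[C]_N) :
  (A *t B) *m U v w =
  U (A 0 0 *: (B *m v) + A 0 1 *: (B *m w)) (A 1 0 *: (B *m v) + A 1 1 *: (B *m w)).
Proof.
rewrite /U mulmxDr !tensmx_mul !colE !tensmxDl !tensmxDr !tensmxZl !tensmxZr.
by rewrite addrACA.
Qed.

Definition blk p (v w : 'cV[C]_(2 ^ p)) : 'cV[C]_(2 ^ p.+1) :=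
  castmx (esym (expnS 2 p), erefl 1%N) (U v w).

Lemma cast_mulmx N N' (e : N = N') (M : 'M[C]_N) (u : 'cV[C]_N) :
  castmx (e, e) M *m castmx (e, erefl 1%N) u = castmx (e, erefl 1%N) (M *m u).
Proof. by case: N' / e; rewrite !castmx_id. Qed.

Lemma cast_scale N N' (e : N = N') c (M : 'M[C]_N) :
  c *: castmx (e, e) M = castmx (e, e) (c *: M).
Proof. by case: N' / e; rewrite !castmx_id. Qed.

Lemma tenspow_ext l (f g : nat -> 'M[C]_2) :
  (forall k, f k = g k) -> tenspow l f = tenspow l g.
Proof.
elim: l f g => [//|l IH] f g fg /=; rewrite fg (IH (fun k => f k.+1) (fun k => g k.+1)) //.
Qed.

Definition Fk (k : nat) : nat -> 'M[C]_2 := fun l =>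
  if (l < k.-1./2)%N then Em R
  else if l == k.-1./2 then (if odd k then g1 R else g2 R) else Tm R.

Definition Cl m k : 'M[C]_(2 ^ m) :=
  if (1 <= k <= 2 * m)%N then tenspow m (Fk k)
  else ii R *: tenspow m (fun _ => Tm R).

Lemma cliffE n k : cliff R n k = Cl (n./2) k.
Proof. by []. Qed.

Definition Z m (a : 'cV[C]_(2 ^ m)) (k : nat) : C :=
  if k == 0%N then sqnorm a else hdot (ii R *: (Cl m k *m a)) a.

Definition Spow p := tenspow p (fun _ => Tm R).

Lemma Zblk_gen p (A : 'M[C]_2) (B : 'M[C]_(2 ^ p)) (v w : 'cV[C]_(2 ^ p)) k :
  k != 0%N -> Cl p.+1 k = castmx (esym (expnS 2 p), esym (expnS 2 p)) (A *t B) ->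
  Z (blk v w) k = ii R * (A 0 0 * hdot (B *m v) v + A 0 1 * hdot (B *m w) v
                        + (A 1 0 * hdot (B *m v) w + A 1 1 * hdot (B *m w) w)).
Proof.
move=> k0 hC; rewrite /Z (negbTE k0) hC /blk cast_mulmx hdotZl hdot_cast mulU hdotU.
by rewrite !hdotDl !hdotZl.
Qed.

Lemma Zblk0 p (v w : 'cV[C]_(2 ^ p)) : Z (blk v w) 0 = hdot v v + hdot w w.
Proof. by rewrite /Z /= sqnormE /blk hdot_cast hdotU. Qed.

Lemma Cl1 p : Cl p.+1 1 = castmx (esym (expnS 2 p), esym (expnS 2 p)) (g1 R *t Spow p).
Proof.
rewrite /Cl /=; congr (castmx _ (_ *t _)); exact: tenspow_ext.
Qed.

Lemma Cl2 p : Cl p.+1 2 = castmx (esym (expnS 2 p), esym (expnS 2 p)) (g2 R *t Spow p).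
Proof.
rewrite /Cl /= mulnS; congr (castmx _ (_ *t _)); exact: tenspow_ext.
Qed.

Lemma ClS p : Cl p p.*2.+1 = ii R *: Spow p.
Proof. by rewrite /Cl mul2n ltnn andbF. Qed.

Lemma ClN p : Cl p.+1 p.*2.+3 =
  castmx (esym (expnS 2 p), esym (expnS 2 p)) ((ii R *: Tm R) *t Spow p).
Proof.
by rewrite /Cl mul2n doubleS ltnn andbF tensmxZl -cast_scale.
Qed.

Lemma ClK p i : (i < p.*2)%N ->
  Cl p.+1 i.+3 = castmx (esym (expnS 2 p), esym (expnS 2 p)) (Em R *t Cl p i.+1).
Proof.
move=> hi.
have h1 : (0 < i.+3 <= 2 * p.+1)%N by rewrite mul2n doubleS !ltnS ltnW.
have h2 : (0 < i.+1 <= 2 * p)%N by rewrite mul2n.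
rewrite /Cl h1 h2 /=.
congr (castmx _ (_ *t _)); apply: tenspow_ext => l. by rewrite /Fk /= ltnS eqSS negbK.
Qed.

Lemma iiii : ii R * ii R = -1.
Proof. by rewrite /ii -expr2 sqr_i. Qed.

Lemma Zblk1 p (v w : 'cV[C]_(2 ^ p)) :
  Z (blk v w) 1 = hdot (Spow p *m w) w - hdot (Spow p *m v) v.
Proof.
rewrite (@Zblk_gen p _ _ v w 1 _ (Cl1 p)) // /g1 !mxE /=.
by rewrite !mul0r addr0 add0r mulrDr !mulrA mulrN iiii !mulN1r opprK addrC mul1r.
Qed.

Lemma Zblk2 p (v w : 'cV[C]_(2 ^ p)) :
  Z (blk v w) 2 = - (hdot (Spow p *m w) v + hdot (Spow p *m v) w).
Proof.
rewrite (@Zblk_gen p _ _ v w 2 _ (Cl2 p)) // /g2 !mxE /=.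
by rewrite !mul0r addr0 add0r mulrDr !mulrA iiii !mulN1r opprD.
Qed.

Lemma ZblkN p (v w : 'cV[C]_(2 ^ p)) :
  Z (blk v w) p.*2.+3 = ii R * (hdot (Spow p *m w) v - hdot (Spow p *m v) w).
Proof.
rewrite (@Zblk_gen p _ _ v w _ _ (ClN p)) // /Tm !mxE /=.
by rewrite !mulr0 !mul0r addr0 add0r mulrN iiii opprK mul1r mulN1r.
Qed.

Lemma ZblkK p i (v w : 'cV[C]_(2 ^ p)) : (i < p.*2)%N ->
  Z (blk v w) i.+3 = Z v i.+1 + Z w i.+1.
Proof.
move=> hi; rewrite (@Zblk_gen p _ _ v w _ _ (ClK hi)) // /Em !mxE /=.
by rewrite !mul0r addr0 add0r !mul1r mulrDr /Z /= !hdotZl.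
Qed.

Lemma ZS p (v : 'cV[C]_(2 ^ p)) : Z v p.*2.+1 = - hdot (Spow p *m v) v.
Proof.
by rewrite /Z /= ClS -scalemxAl !hdotZl mulrA iiii mulN1r.
Qed.

Lemma sq3_eq0 (a b c : R) : a ^+ 2 + b ^+ 2 + c ^+ 2 = 0 -> a = 0 /\ b = 0 /\ c = 0.
Proof.
move=> h.
have ha : a ^+ 2 = 0 by nra.
have hb : b ^+ 2 = 0 by nra.
have hc : c ^+ 2 = 0 by nra.
by move: ha hb hc => /eqP; rewrite sqrf_eq0 => /eqP -> /eqP; rewrite sqrf_eq0 => /eqP -> /eqP; rewrite sqrf_eq0 => /eqP ->.
Qed.

Lemma helper1 (x1 x2 x3 : R) : exists gr gi q : R,
  (q * (1 + gr ^+ 2 + gi ^+ 2)) ^+ 2 = x1 ^+ 2 + x2 ^+ 2 + x3 ^+ 2 /\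
  (gr ^+ 2 + gi ^+ 2 - 1) * q = x1 /\ - 2 * gr * q = x2 /\ - 2 * gi * q = x3.
Proof.
set r2 := x1 ^+ 2 + x2 ^+ 2 + x3 ^+ 2.
have r2ge0 : 0 <= r2 by rewrite /r2; nra.
have [rho [hrho rho0]] : exists rho : R, rho ^+ 2 = r2 /\ 0 <= rho.
  by exists (Num.sqrt r2); rewrite sqr_sqrtr // sqrtr_ge0.
have e3 : x3 ^+ 2 = rho ^+ 2 - x1 ^+ 2 - x2 ^+ 2 by rewrite hrho /r2; ring.
have [rz|rnz] := eqVneq rho 0.
  have := hrho; rewrite rz expr0n /= => /esym /sq3_eq0 [h1 [h2 h3]].
  by exists 0, 0, 0; rewrite /r2 h1 h2 h3; split; [|split; [|split]]; ring.
have rpos : 0 < rho by rewrite lt_def rnz rho0.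
have x1le : x1 ^+ 2 <= rho ^+ 2 by rewrite hrho /r2; nra.
have [x1ge|x1lt] := lerP 0 x1.
  set D := rho + x1.
  have D0 : D != 0 by rewrite /D; apply/negP => /eqP; nra.
  exists (x2 / D), (x3 / D), (- D / 2).
  split; last split; last split; try (by field).
    rewrite -hrho !expr_div_n e3 /D; field; exact: D0.
  rewrite !expr_div_n e3 /D; field; exact: D0.
set D := rho - x1.
have D0 : D != 0 by rewrite /D; apply/negP => /eqP; nra.
exists (- x2 / D), (- x3 / D), (D / 2).
split; last split; last split; try (by field).
  rewrite -hrho !expr_div_n !sqrrN e3 /D; field; exact: D0.
rewrite !expr_div_n !sqrrN e3 /D; field; exact: D0.
Qed.

Lemma helper2 (x0 x1 x2 x3 : R) : 0 < x0 -> x0 ^+ 2 = x1 ^+ 2 + x2 ^+ 2 + x3 ^+ 2 ->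
  exists s wr wi : R, s ^+ 2 + wr ^+ 2 + wi ^+ 2 = x0 /\ wr ^+ 2 + wi ^+ 2 - s ^+ 2 = x1
    /\ - 2 * s * wr = x2 /\ - 2 * s * wi = x3.
Proof.
move=> x0pos hx.
have x1le : x1 <= x0 by nra.
have [e|ne] := eqVneq x1 x0.
  have h23 : x2 ^+ 2 + x3 ^+ 2 = 0 by rewrite e in hx; lra.
  have h2 : x2 = 0 by apply/eqP; rewrite -sqrf_eq0; apply/eqP; nra.
  have h3 : x3 = 0 by apply/eqP; rewrite -sqrf_eq0; apply/eqP; nra.
  exists 0, (Num.sqrt x0), 0; rewrite sqr_sqrtr ?ltW // h2 h3 e.
  by split; [|split; [|split]]; ring.
have dpos : 0 < (x0 - x1) / 2 by rewrite divr_gt0 //; rewrite lt_def subr_eq0 eq_sym ne subr_ge0.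
have [s [hs spos]] : exists s : R, s ^+ 2 = (x0 - x1) / 2 /\ 0 < s.
  by exists (Num.sqrt ((x0 - x1) / 2)); rewrite sqr_sqrtr ?ltW // sqrtr_gt0.
have s0 : s != 0 by rewrite gt_eqF.
have e23 : x3 ^+ 2 = x0 ^+ 2 - x1 ^+ 2 - x2 ^+ 2 by rewrite hx; ring.
have d0 : x0 - x1 != 0 by rewrite subr_eq0 eq_sym.
exists s, (- x2 / (2 * s)), (- x3 / (2 * s)).
split; last split; last split; try (by field).
  rewrite !expr_div_n !sqrrN e23 exprMn hs; field; exact: d0.
rewrite !expr_div_n !sqrrN e23 exprMn hs; field; exact: d0.
Qed.


Definition tgt m (b : bool) (x : nat -> R) :=
  0 < x 0%N /\ x 0%N ^+ 2 = \sum_(i < m.*2 + b) x i.+1 ^+ 2.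
Definition good m (b : bool) (x : nat -> R) :=
  exists a : 'cV[C]_(2 ^ m), forall j, (j <= m.*2 + b)%N -> (x j)%:C = Z a j.

Lemma hdot1 (u v : 'cV[C]_1) : hdot u v = u 0 0 * (v 0 0)^*.
Proof. by rewrite /hdot big_ord1. Qed.

Ltac cplx := apply/eqP; rewrite eq_complex /=; apply/andP; split; apply/eqP.

Lemma base b x : tgt 1 b x -> good 1 b x.
Proof.
move=> [x0pos hx].
have hx' : x 0%N ^+ 2 = x 1%N ^+ 2 + x 2%N ^+ 2 + (if b then x 3%N else 0) ^+ 2.
  by case: b hx => /= ->; rewrite !big_ord_recl big_ord0 //=; ring.
have [s [wr [wi [h0 [h1 [h2 h3]]]]]] := helper2 x0pos hx'.
pose v : 'cV[C]_(2 ^ 0) := const_mx (s%:C).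
pose w : 'cV[C]_(2 ^ 0) := const_mx (wr +i* wi).
exists (blk v w) => j hj.
case: j hj => [|[|[|[|j]]]] hj.
- rewrite Zblk0 !hdot1 !mxE -h0; cplx; ring.
- rewrite Zblk1 /Spow /= !mul1mx !hdot1 !mxE -h1; cplx; ring.
- rewrite Zblk2 /Spow /= !mul1mx !hdot1 !mxE -h2; cplx; ring.
- clear hx hx'; case: b hj h3 => // _ h3.
  rewrite (@ZblkN 0 v w) /Spow /= !mul1mx !hdot1 !mxE -h3; cplx; ring.
- by clear hx hx' h3; case: b hj.
Qed.

Lemma sum_split2 (f : nat -> R) K :
  \sum_(i < K.+2) f i = f 0%N + f 1%N + \sum_(i < K) f i.+2.
Proof. by rewrite !big_ord_recl addrA. Qed.

Lemma ZZ p (v : 'cV[C]_(2 ^ p)) (g : C) k : k != 0%N -> Z (g *: v) k = g * g^* * Z v k.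
Proof.
move=> hk; rewrite /Z (negbTE hk) -scalemxAr !hdotZl hdotZr; ring.
Qed.

Lemma step p b x : (0 < p)%N -> (forall y, tgt p true y -> good p true y) ->
  tgt p.+1 b x -> good p.+1 b x.
Proof.
move=> p0 IH [x0pos hx].
set Srest := \sum_(i < p.*2) x i.+3 ^+ 2.
have hx' : x 0%N ^+ 2 = x 1%N ^+ 2 + x 2%N ^+ 2 + (if b then x p.*2.+3 else 0) ^+ 2 + Srest.
  have E : ((p.+1).*2 + b = (p.*2 + b).+2)%N by rewrite doubleS.
  rewrite E (sum_split2 (fun n => x n.+1 ^+ 2)) in hx; rewrite hx.
  case: b {E hx} => /=; last by rewrite addn0 expr0n /= addr0.
  by rewrite addn1 big_ord_recr /= -/Srest; ring.
have [gr [gi [q [hq [h1 [h2 h3]]]]]] := helper1 (x 1%N) (x 2%N) (if b then x p.*2.+3 else 0).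
set c := 1 + gr ^+ 2 + gi ^+ 2 in hq h1.
have c0 : 0 < c by rewrite /c; nra.
have cn0 : c != 0 by rewrite gt_eqF.
pose y j := if j == 0%N then x 0%N / c else if j == p.*2.+1 then - q else x j.+2 / c.
have ty : tgt p true y.
  split; first by rewrite /y /= divr_gt0.
  rewrite /= addn1 big_ord_recr /=.
  have -> : y p.*2.+1 = - q by rewrite /y /= eqxx.
  have -> : \sum_(i < p.*2) y (widen_ord (leqnSn p.*2) i).+1 ^+ 2 = Srest / c ^+ 2.
    rewrite /Srest mulr_suml; apply: eq_bigr => i _.
    by rewrite /y /= ltn_eqF ?ltnS // exprMn exprVn.
  rewrite /y /= exprMn exprVn hx' -hq; field; exact: cn0.
have [v hv] := IH y ty.
pose g : C := gr +i* gi.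
have H : hdot (Spow p *m v) v = q%:C.
  have := ZS v; rewrite -hv ?leqnn /= ?addn1 // /y /= eqxx => /eqP.
  by rewrite rmorphN eqr_opp => /eqP <-.
have hv0 : hdot v v = (x 0%N / c)%:C by rewrite -sqnormE (hv 0%N isT).
exists (blk v (g *: v)) => j hj.
case: j hj => [|[|[|j]]] hj.
- rewrite Zblk0 hdotZl hdotZr hv0; cplx; last ring.
  by rewrite /c; field; exact: cn0.
- rewrite Zblk1 -scalemxAr hdotZl hdotZr H -h1; cplx; ring.
- rewrite Zblk2 -scalemxAr hdotZl hdotZr H -h2; cplx; ring.
case: (ltnP j p.*2) => hjp.
- rewrite (ZblkK _ _ hjp) ZZ // -hv; last by rewrite addn1 ltnS ltnW.
  rewrite /y /= ltn_eqF ?ltnS //; cplx; last ring.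
  by rewrite /c; field; exact: cn0.
have ej : j = p.*2.
  apply/eqP; rewrite eqn_leq hjp andbT.
  by move: hj; rewrite doubleS; case: b {hx hx' h3 hq} => /=; rewrite ?addn1 ?addn0 !ltnS // => /ltnW.
subst j.
case: b hj {hx hx' hq} h3 => /= hj h3; last by move: hj; rewrite doubleS addn0 ltnn.
rewrite ZblkN -scalemxAr hdotZl hdotZr H -h3; cplx; ring.
Qed.

Lemma oddgood p : (0 < p)%N -> forall y, tgt p true y -> good p true y.
Proof.
elim: p => // p IH _ y ty.
case: p IH ty => [|p] IH ty; first exact: base.
by apply: step => //; exact: IH.
Qed.

Lemma allgood m b x : (0 < m)%N -> tgt m b x -> good m b x.
Proof.
case: m => // [[|p]] _ t; first exact: base.
by apply: step t => //; exact: oddgood.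
Qed.

Lemma main_sec (n : nat) (hn : (2 <= n)%N) (zeta : 'cV[R]_(n.+1)) :
  future_null zeta ->
  exists a : 'cV[R[i]]_(2 ^ n./2),
    map_mx (fun x : R => x%:C) zeta = zeta_of a.
Proof.
move=> [_ [hnull hpos]].
pose x j := zeta (inord j) 0.
have m0 : (0 < n./2)%N by rewrite half_gt0.
have E : (n./2.*2 + odd n)%N = n by rewrite addnC odd_double_half.
have x0E : x 0%N = zeta ord0 0 by rewrite /x; congr (zeta _ _); apply: val_inj; rewrite /= inordK.
have t : tgt n./2 (odd n) x.
  split; first by rewrite x0E.
  rewrite E x0E; move: hnull; rewrite /mink_dot big_mkcond big_ord_recl /= add0r.
  move/eqP; rewrite subr_eq0 expr2 => /eqP <-.
  apply: eq_bigr => i _; rewrite /x expr2.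
  have -> : (inord i.+1 : 'I_n.+1) = lift ord0 i.
    by apply: val_inj; rewrite /= inordK // ltnS.
  by [].
have [a ha] := allgood m0 t.
exists a; apply/matrixP => i j; rewrite !mxE ord1.
have hi : (i <= n./2.*2 + odd n)%N by rewrite E -ltnS.
by rewrite -[i in zeta i]inord_val ha.
Qed.

End S.

Theorem proposition2p4 (R : realType) (n : nat) (hn : (2 <= n)%N)
    (zeta : 'cV[R]_(n.+1)) :
  future_null zeta ->
  exists a : 'cV[R[i]]_(2 ^ n./2),
    map_mx (fun x : R => x%:C) zeta = zeta_of a.
Proof. exact: main_sec. Qed.
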